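(* Let $A=(a_{ij})$ be a nonnegative $n\times n$ matrix. Then $A$ is primitive if and only if $A$ is irreducible and there exists $j\in[n]$ such that $A$ is $j$-primitive.
   Context: $A$ is primitive if $A^k>0$ (entrywise) for some positive integer $k$. $A$ is reducible if there is a nonempty proper subset $I\subset[n]$ with $a_{ij}=0$ for all $i\in I$, $j\notin I$; otherwise irreducible. For $j\in[n]$, $A$ is $j$-primitive if there exists a positive integer $k$ with $(A^k)_{uj}>0$ for all $u\in[n]$. *)

(* Defs.v *)
From mathcomp Require Import all_boot all_order all_algebra.
Set Implicit Arguments. Unset Strict Implicit. Unset Printing Implicit Defensive.
Import Order.TTheory GRing.Theory Num.Theory.
Local Open Scope ring_scope.

(* Matrices are n x n with n >= 1 written as 'M[R]_n.+1 (indices 'I_n.+1). *)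

Definition nonneg_mx (R : numDomainType) (n : nat) (A : 'M[R]_n) : Prop :=
  forall i j, 0 <= A i j.

Definition primitive_mx (R : numDomainType) (n : nat) (A : 'M[R]_n.+1) : Prop :=
  exists k : nat, (0 < k)%N /\ forall i j, 0 < (A ^+ k) i j.

Definition reducible_mx (R : numDomainType) (n : nat) (A : 'M[R]_n.+1) : Prop :=
  exists I : {set 'I_n.+1}, [/\ I != set0, I != setT &
    forall i j, i \in I -> j \notin I -> A i j = 0].

Definition irreducible_mx (R : numDomainType) (n : nat) (A : 'M[R]_n.+1) : Prop :=
  ~ reducible_mx A.

Definition j_primitive_mx (R : numDomainType) (n : nat) (A : 'M[R]_n.+1)
    (j : 'I_n.+1) : Prop :=
  exists k : nat, (0 < k)%N /\ forall u, 0 < (A ^+ k) u j.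

(* Main.v *)
Require Import Defs.
From mathcomp Require Import all_boot all_order all_algebra.
From Stdlib Require Import ClassicalEpsilon.
Import Order.TTheory GRing.Theory Num.Theory.
Local Open Scope ring_scope.

Section Aux.
Variables (R : realFieldType) (n : nat).
Implicit Types (A B C : 'M[R]_n.+1).

Lemma pow_nonneg A : nonneg_mx A -> forall m i j, 0 <= (A ^+ m) i j.
Proof.
move=> hA; elim=> [|m IH] i j.
  by rewrite expr0 mxE ler0n.
rewrite exprS mxE; apply: sumr_ge0 => l _; exact: mulr_ge0.
Qed.

Lemma mul_pos B C u l v : (forall i j, 0 <= B i j) -> (forall i j, 0 <= C i j) ->
  0 < B u l -> 0 < C l v -> 0 < (B * C) u v.
Proof.
move=> hB hC h1 h2; rewrite mxE (bigD1 l) //=.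
apply: (lt_le_trans (mulr_gt0 h1 h2)); rewrite lerDl.
by apply: sumr_ge0 => i _; apply: mulr_ge0.
Qed.

End Aux.
Arguments pow_nonneg {R n A}.
Arguments mul_pos {R n B C u l v}.

Theorem proposition4p4 (R : realFieldType) (n : nat) (A : 'M[R]_n.+1) :
  nonneg_mx A ->
  (primitive_mx A <-> irreducible_mx A /\ exists j : 'I_n.+1, j_primitive_mx A j).
Proof.
move=> hA; have hP := pow_nonneg hA.
split.
- move=> [k [k0 hk]]; split; last by exists ord0; exists k; split => // u; apply: hk.
  move=> [I [In0 InT hI]].
  have H0 : forall m i j, i \in I -> j \notin I -> (A ^+ m) i j = 0.
    elim=> [|m IH] i j iI jI.
      rewrite expr0 mxE; case: eqP => // eij; by move: jI; rewrite -eij iI.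
    rewrite exprS mxE big1 // => l _.
    case lI: (l \in I); first by rewrite IH ?lI // mulr0.
    by rewrite hI ?lI // mul0r.
  have [i iI] := set0Pn _ In0.
  have [j jI] : exists j, j \notin I.
    apply/existsP; apply: contraR InT => /existsPn h.
    by apply/eqP/setP => x; rewrite inE; move: (h x); rewrite negbK.
  by move: (hk i j); rewrite H0 // ltxx.
- move=> [hirr [j [k [k0 hk]]]].
  have hrow : forall u, exists l, 0 < A u l.
    move=> u; apply/existsP; apply: contraT => /existsPn h.
    case: k k0 hk => // k' _ hk.
    move: (hk u); rewrite exprS mxE big1; first by rewrite ltxx.
    move=> l _; have hl : A u l = 0.
      by apply/eqP; rewrite eq_le hA andbT leNgt; apply: h.
    by rewrite hl mul0r.
  have hcol : forall d u, 0 < (A ^+ (k + d)) u j.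
    elim=> [|d IH] u; first by rewrite addn0.
    have [l hl] := hrow u.
    by rewrite addnS exprS; apply: (mul_pos hA (hP _) hl).
  have hreach : forall v, exists m, 0 < (A ^+ m) j v.
    pose S := [set v | if excluded_middle_informative (exists m, 0 < (A ^+ m) j v)
                       then true else false].
    have inS v : v \in S <-> exists m, 0 < (A ^+ m) j v.
      rewrite inE; case: excluded_middle_informative => //; split => //.
    apply: NNPP => hn; apply: hirr; exists S; split.
    + apply/set0Pn; exists j; apply/inS; exists 0%N; by rewrite expr0 mxE eqxx ltr01.
    + have [v hv] := not_all_ex_not _ _ hn.
      apply/eqP => ST; apply: hv; apply/inS; by rewrite ST inE.
    + move=> i l /inS [m hm] lS.
      apply/eqP; rewrite eq_le hA andbT leNgt; apply/negP => hil.
      move/negP: lS; apply; apply/inS; exists m.+1.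
      rewrite exprSr; exact: (mul_pos (hP _) hA hm hil).
  have [f hf] := fin_all_exists hreach.
  pose M := (\max_v f v)%N.
  exists (k + M)%N; split; first by rewrite addn_gt0 k0.
  move=> u v.
  have fv : (f v <= M)%N by apply: (leq_bigmax v).
  have -> : (k + M = (k + (M - f v)) + f v)%N by rewrite -addnA subnK.
  rewrite exprD; exact: (mul_pos (hP _) (hP _) (hcol _ u) (hf v)).
Qed.
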